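(* Let $\{x_k\}_{k\ge 0}$ be a log-convex sequence and define $z_n=\sum_{k=0}^{n}S(n,k)x_k$ for $n\ge 0$. Then $\{z_n\}_{n\ge 0}$ is log-convex. That is, the Stirling transformation of the second kind preserves log-convexity.
   Context: $S(n,k)$ denotes the Stirling number of the second kind: the number of partitions of $\{1,\dots,n\}$ into exactly $k$ blocks, with $S(0,0)=1$ and $S(n,k)=0$ unless $0\le k\le n$. A sequence $a_0,a_1,\ldots$ of nonnegative real numbers is log-convex if $a_{k-1}a_{k+1}\ge a_k^2$ for all $k\ge 1$. *)

(* Defs.v *)
From mathcomp Require Import all_boot all_order all_algebra.
Set Implicit Arguments. Unset Strict Implicit. Unset Printing Implicit Defensive.
Import Order.TTheory GRing.Theory Num.Theory.
Local Open Scope ring_scope.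

Fixpoint stirling2 (n k : nat) {struct n} : nat :=
  match n, k with
  | 0, 0 => 1
  | 0, _.+1 => 0
  | _.+1, 0 => 0
  | n'.+1, k'.+1 => (k'.+1 * stirling2 n' k'.+1 + stirling2 n' k')%N
  end.

Definition log_convex (R : realFieldType) (a : nat -> R) : Prop :=
  (forall k, 0 <= a k) /\ (forall k, (1 <= k)%N -> a k ^+ 2 <= a k.-1 * a k.+1).

Definition stirling2_transform (R : realFieldType) (x : nat -> R) (n : nat) : R :=
  \sum_(0 <= k < n.+1) (stirling2 n k)%:R * x k.

(* Main.v *)
Require Import Defs.
From mathcomp Require Import all_boot all_order all_algebra.
From mathcomp Require Import ring lra zify.
Import Order.TTheory GRing.Theory Num.Theory.
Local Open Scope ring_scope.

Lemma sS n k : stirling2 n.+1 k.+1 = (k.+1 * stirling2 n k.+1 + stirling2 n k)%N.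
Proof. by []. Qed.

Lemma stirling2_gt m k : (m < k)%N -> stirling2 m k = 0%N.
Proof.
elim: m k => [|m IH] [|k] //= hk.
by rewrite !IH ?muln0 // ltnW.
Qed.

Lemma tp2_step (p q : nat -> nat) i j :
  (forall i j, (i <= j)%N -> (p j * q i <= p i * q j)%N) -> (i <= j)%N ->
  ((j.+1 * p j.+1 + p j) * (i.+1 * q i.+1 + q i) <=
   (i.+1 * p i.+1 + p i) * (j.+1 * q j.+1 + q j))%N.
Proof.
move=> H hij.
case: (ltnP i j) => hlt; last first.
  have e : j = i by apply/eqP; rewrite eqn_leq hij hlt.
  by rewrite e.
have h1 := H _ _ (hij : (i.+1 <= j.+1)%N).
have h2 := H _ _ hij.
have h3 := H i j.+1 (leqW hij).
have h4 : (p j * q i.+1 <= p i.+1 * q j)%N by exact: H.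
have k1 := leq_mul (leqnn (j.+1 * i.+1)) h1.
have k3 := leq_mul (leqnn j.+1) h3.
have k4 := leq_mul (leqnn i.+1) h4.
nia.
Qed.

Lemma tp2 n i j : (i <= j)%N ->
  (stirling2 n j * stirling2 n.+1 i <= stirling2 n i * stirling2 n.+1 j)%N.
Proof.
elim: n i j => [|n IH] i j hij.
  case: j hij => [|j] hij; first by case: i hij.
  by rewrite /= mul0n.
case: i hij => [|i] hij; first by rewrite /= !muln0.
case: j hij => [|j] hij //.
have := @tp2_step (stirling2 n) (stirling2 n.+1) i j IH hij.
by rewrite -!sS.
Qed.

Lemma binet (R : realFieldType) (N : nat) (a1 a2 b1 b2 : nat -> R) :
  (forall i j, (i <= j)%N -> 0 <= a1 i * a2 j - a1 j * a2 i) ->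
  (forall i j, (i <= j)%N -> 0 <= b1 i * b2 j - b1 j * b2 i) ->
  0 <= (\sum_(0 <= k < N) a1 k * b1 k) * (\sum_(0 <= k < N) a2 k * b2 k)
     - (\sum_(0 <= k < N) a1 k * b2 k) * (\sum_(0 <= k < N) a2 k * b1 k).
Proof.
move=> Ha Hb.
set S11 := \sum_(0 <= k < N) a1 k * b1 k.
set S22 := \sum_(0 <= k < N) a2 k * b2 k.
set S12 := \sum_(0 <= k < N) a1 k * b2 k.
set S21 := \sum_(0 <= k < N) a2 k * b1 k.
have E1 : forall i, \sum_(0 <= j < N) (a1 i * a2 j - a1 j * a2 i) * (b1 i * b2 j - b1 j * b2 i)
   = a1 i * b1 i * S22 - a1 i * b2 i * S21 - a2 i * b1 i * S12 + a2 i * b2 i * S11.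
  move=> i; rewrite /S11 /S12 /S21 /S22 !mulr_sumr -!sumrB -big_split /=.
  by apply: eq_bigr => j _; ring.
have E : \sum_(0 <= i < N) \sum_(0 <= j < N) (a1 i * a2 j - a1 j * a2 i) * (b1 i * b2 j - b1 j * b2 i)
   = 2 * (S11 * S22 - S12 * S21).
  rewrite (eq_bigr _ (fun i _ => E1 i)) !(big_split, sumrB) /= !sumrN -!mulr_suml -/S11 -/S12 -/S21 -/S22.
  ring.
have P : 0 <= \sum_(0 <= i < N) \sum_(0 <= j < N) (a1 i * a2 j - a1 j * a2 i) * (b1 i * b2 j - b1 j * b2 i).
  apply: sumr_ge0 => i _; apply: sumr_ge0 => j _.
  case: (leqP i j) => h; first by apply: mulr_ge0; [exact: Ha | exact: Hb].
  have := Ha j i (ltnW h); have := Hb j i (ltnW h); nra.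
rewrite E in P; lra.
Qed.

Lemma transform_eq (R : realFieldType) (x : nat -> R) m N : (m < N)%N ->
  stirling2_transform x m = \sum_(0 <= k < N) (stirling2 m k)%:R * x k.
Proof.
move=> hN; rewrite /stirling2_transform -(subnKC hN).
elim: (N - m.+1)%N => [|d IH]; first by rewrite addn0.
rewrite addnS [in RHS]big_nat_recr //= -IH stirling2_gt ?mul0r ?addr0 //.
by rewrite ltnS leq_addr.
Qed.

Lemma rec (R : realFieldType) (x : nat -> R) m N : (m.+2 <= N)%N ->
  \sum_(0 <= k < N) (stirling2 m.+1 k)%:R * x k =
  \sum_(0 <= k < N) (stirling2 m k)%:R * (k%:R * x k + x k.+1).
Proof.
case: N => [|N] // hN.
transitivity (\sum_(0 <= i < N) ((i.+1)%:R * (stirling2 m i.+1)%:R * x i.+1)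
            + \sum_(0 <= i < N) (stirling2 m i)%:R * x i.+1).
  rewrite big_nat_recl // /= ?natr0 mul0r add0r -big_split /=.
  by apply: eq_bigr => i _; rewrite natrD natrM; ring.
have -> : \sum_(0 <= k < N.+1) (stirling2 m k)%:R * (k%:R * x k + x k.+1)
   = \sum_(0 <= k < N.+1) (stirling2 m k)%:R * (k%:R * x k)
     + \sum_(0 <= k < N.+1) (stirling2 m k)%:R * x k.+1.
  by rewrite -big_split /=; apply: eq_bigr => i _; ring.
rewrite big_nat_recl // [X in _ = _ + X]big_nat_recr // /= (@stirling2_gt m N) //.
rewrite ?natr0 !mul0r ?mulr0 add0r addr0.
by congr (_ + _); apply: eq_bigr => i _; ring.
Qed.

Lemma lc_cross (R : realFieldType) (x : nat -> R) : log_convex x ->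
  forall i j, (i <= j)%N -> x i.+1 * x j <= x i * x j.+1.
Proof.
move=> [x0 xc] i j hij; rewrite -(subnKC hij).
elim: (j - i)%N => [|d IH]; first by rewrite addn0 mulrC.
rewrite addnS; set j' := (i + d)%N in IH *.
have c2 := xc j'.+1 isT; rewrite /= in c2.
have := x0 j'.+1; rewrite le0r => /orP[/eqP -> | cpos].
  by rewrite mulr0; apply: mulr_ge0.
rewrite -(ler_pM2l cpos).
have k1 := ler_wpM2l (x0 i.+1) c2.
have k2 := ler_wpM2r (x0 j'.+2) IH.
nra.
Qed.

Theorem mainTheorem2 (R : realFieldType) (x : nat -> R) :
  log_convex x -> log_convex (stirling2_transform x).
Proof.
move=> lcx; have [x0 xc] := lcx; split.
  move=> n; rewrite /stirling2_transform; apply: sumr_ge0 => k _.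
  by apply: mulr_ge0 => //; apply: ler0n.
case=> [|m] // _ /=.
pose y := fun k : nat => k%:R * x k + x k.+1.
have e0 := @transform_eq R x m m.+3 ltac:(lia).
have e1 := @transform_eq R x m.+1 m.+3 ltac:(lia).
have e1' : stirling2_transform x m.+1 = \sum_(0 <= k < m.+3) (stirling2 m k)%:R * y k.
  by rewrite e1 rec.
have e2 : stirling2_transform x m.+2 = \sum_(0 <= k < m.+3) (stirling2 m.+1 k)%:R * y k.
  by rewrite (@transform_eq R x m.+2 m.+3 ltac:(lia)) rec.
have B := @binet R m.+3 (fun k => (stirling2 m k)%:R) (fun k => (stirling2 m.+1 k)%:R) x y.
have := B.
rewrite -e0 -e1 -e1' -e2 expr2 => H; rewrite -subr_ge0; apply: H.
- move=> i j hij; rewrite subr_ge0 -!natrM ler_nat; exact: tp2.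
- move=> i j hij; rewrite /y.
  have h1 := @lc_cross R x lcx i j hij.
  have hji : i%:R <= j%:R :> R by rewrite ler_nat.
  have h2 := mulr_ge0 (x0 i) (x0 j).
  have h3 : 0 <= (j%:R - i%:R) * (x i * x j) :> R by apply: mulr_ge0 => //; rewrite subr_ge0.
  nra.
Qed.
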